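(* Let $\mathcal H$ be the Hilbert space of $n$ qubits, $d=2^n$. Let $\mathsf H_0=\{|\Psi\rangle\langle\Psi| : |\Psi\rangle=|\phi\rangle\otimes|\psi\rangle,\ |\phi\rangle,|\psi\rangle\in\mathcal H \text{ unit vectors}\}$ and $\mathsf H_1=\{|\Psi\rangle\langle\Psi| : |\Psi\rangle\in\mathcal H^{\otimes2}\text{ maximally entangled}\}$. Then for every POVM $\{M_0,M_1\}$ on $\mathcal H^{\otimes 2}$ (outcome $i$ meaning ''the state is in $\mathsf H_i$''), $$\sup_{\rho\in\mathsf H_0}\operatorname{tr}(M_1\rho)+\sup_{\rho\in\mathsf H_1}\operatorname{tr}(M_0\rho)\ \ge\ 1;$$ in particular, if $\operatorname{tr}(M_0\rho)\le\delta$ for all $\rho\in\mathsf H_1$, then $\operatorname{tr}(M_1\rho)\ge1-\delta$ for some $\rho\in\mathsf H_0$, i.e., no measurement distinguishes $\mathsf H_0$ from $\mathsf H_1$ better than guessing at random.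
   Context: A pure state $|\Psi\rangle\in\mathcal H^{\otimes 2}$ is maximally entangled if $|\Psi\rangle=\sum_{i=1}^d\alpha_i|e_i\rangle\otimes|f_i\rangle$ with $|\alpha_i|^2=1/d$ for all $i$, for some orthonormal bases $\{|e_i\rangle\}$ and $\{|f_i\rangle\}$ of $\mathcal H$. A POVM $\{M_0,M_1\}$ is a pair of positive semidefinite operators with $M_0+M_1=I$; outcome $i$ occurs with probability $\operatorname{tr}(M_i\rho)$. *)

(* Defs.v *)
From HB Require Import structures.
From mathcomp Require Import all_boot all_order all_algebra.
From mathcomp Require Import complex mxtens.
From mathcomp Require Import boolp classical_sets reals.
Set Implicit Arguments. Unset Strict Implicit. Unset Printing Implicit Defensive.
Import Order.TTheory GRing.Theory Num.Theory.
Local Open Scope ring_scope.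
Local Open Scope classical_set_scope.

Definition adj (R : rcfType) (m n : nat) (A : 'M[R[i]]_(m, n)) : 'M[R[i]]_(n, m) :=
  (map_mx Num.conj A)^T.

Definition psd (R : rcfType) (N : nat) (A : 'M[R[i]]_N) : Prop :=
  A = adj A /\ forall v : 'cV[R[i]]_N, 0 <= (adj v *m A *m v) 0 0.

Definition povm2 (R : rcfType) (N : nat) (M0 M1 : 'M[R[i]]_N) : Prop :=
  psd M0 /\ psd M1 /\ M0 + M1 = 1%:M.

Definition unit_vec (R : rcfType) (N : nat) (v : 'cV[R[i]]_N) : Prop :=
  (adj v *m v) 0 0 = 1.

Definition proj (R : rcfType) (N : nat) (v : 'cV[R[i]]_N) : 'M[R[i]]_N :=
  v *m adj v.

Definition orthonormal_basis (R : rcfType) (d : nat) (e : 'I_d -> 'cV[R[i]]_d) : Prop :=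
  forall i j : 'I_d, (adj (e i) *m e j) 0 0 = (i == j)%:R.

Definition max_entangled (R : rcfType) (d : nat) (Psi : 'cV[R[i]]_(d * d)) : Prop :=
  exists (e f : 'I_d -> 'cV[R[i]]_d) (alpha : 'I_d -> R[i]),
    [/\ orthonormal_basis e, orthonormal_basis f,
        (forall k, `|alpha k| ^+ 2 = d%:R^-1)
      & Psi = \sum_(k < d) alpha k *: (e k *t f k)].

Definition H0 (R : rcfType) (d : nat) : set 'M[R[i]]_(d * d) :=
  [set rho | exists phi psi : 'cV[R[i]]_d,
     [/\ unit_vec phi, unit_vec psi & rho = proj (phi *t psi)]].

Definition H1 (R : rcfType) (d : nat) : set 'M[R[i]]_(d * d) :=
  [set rho | exists Psi : 'cV[R[i]]_(d * d), max_entangled Psi /\ rho = proj Psi].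

(* tr(M rho), as a real number (real part; it is real for psd M and rho) *)
Definition prob (R : rcfType) (N : nat) (M rho : 'M[R[i]]_N) : R :=
  complex.Re (\tr (M *m rho)).

(* Main.v *)
Require Import Defs.
From HB Require Import structures.
From mathcomp Require Import all_boot all_order all_algebra.
From mathcomp Require Import complex mxtens.
From mathcomp Require Import boolp classical_sets reals.
From mathcomp Require Import ring lra.
Import Order.TTheory GRing.Theory Num.Theory.
Local Open Scope ring_scope.

Section Aux.
Variable R : rcfType.
Local Notation C := (R[i]).

Lemma adjM m n p (A : 'M[C]_(m,n)) (B : 'M[C]_(n,p)) : adj (A *m B) = adj B *m adj A.
Proof. by rewrite /adj map_mxM trmx_mul. Qed.

Lemma adjD m n (A B : 'M[C]_(m,n)) : adj (A + B) = adj A + adj B.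
Proof. by apply/matrixP => i j; rewrite !mxE rmorphD. Qed.

Lemma adj0 m n : adj (0 : 'M[C]_(m,n)) = 0.
Proof. by apply/matrixP => i j; rewrite !mxE rmorph0. Qed.

Lemma adjZ m n (a : C) (A : 'M[C]_(m,n)) : adj (a *: A) = Num.conj a *: adj A.
Proof. by apply/matrixP => i j; rewrite !mxE rmorphM. Qed.

Lemma adj_sum m n d (F : 'I_d -> 'M[C]_(m,n)) : adj (\sum_k F k) = \sum_k adj (F k).
Proof. exact: (big_morph _ (@adjD m n) (@adj0 m n)). Qed.

Lemma adjT m n p q (A : 'M[C]_(m,n)) (B : 'M[C]_(p,q)) : adj (A *t B) = adj A *t adj B.
Proof. by rewrite /adj map_mxT trmx_tens. Qed.

Lemma adj_delta d (k : 'I_d) : adj (delta_mx k 0 : 'cV[C]_d) = delta_mx 0 k.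
Proof. by rewrite /adj map_delta_mx trmx_delta. Qed.

Lemma quadE N d (A : 'M[C]_N) (a b : 'I_d -> C) (x y : 'I_d -> 'cV[C]_N) :
 (adj (\sum_k a k *: x k) *m A *m (\sum_l b l *: y l)) 0 0 =
  \sum_k \sum_l (Num.conj (a k) * b l) * (adj (x k) *m A *m y l) 0 0.
Proof.
rewrite adj_sum !mulmx_suml summxE; apply: eq_bigr => k _.
rewrite adjZ -!scalemxAl mulmx_sumr mxE summxE mulr_sumr; apply: eq_bigr => l _.
by rewrite -scalemxAr !mxE mulrA.
Qed.

Lemma tens11 (u v : 'M[C]_1) : (u *t v) 0 0 = u 0 0 * v 0 0.
Proof. by rewrite mxE !(ord1 (_ : 'I_1)). Qed.

Lemma tens_inner d e (x x' : 'cV[C]_d) (y y' : 'cV[C]_e) :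
  (adj (x *t y) *m (x' *t y')) 0 0 = (adj x *m x') 0 0 * (adj y *m y') 0 0.
Proof. by rewrite adjT tensmx_mul tens11. Qed.

Lemma delta_inner d (k l : 'I_d) :
  (adj (delta_mx k 0 : 'cV[C]_d) *m (delta_mx l 0 : 'cV[C]_d)) 0 0 = (k == l)%:R.
Proof. by rewrite adj_delta mul_delta_mx_cond; case: eqP => _; rewrite ?mulr0n ?mulr1n !mxE. Qed.

Lemma quad1 N (A : 'M[C]_N) (v : 'cV[C]_N) :
  \tr (A *m proj v) = (adj v *m A *m v) 0 0.
Proof. by rewrite /proj mulmxA mxtrace_mulC mulmxA /mxtrace big_ord1 mxE. Qed.

End Aux.

Section Aux2.
Variable R : rcfType.
Local Notation C := (R[i]).

Lemma ReD (x y : C) : complex.Re (x + y) = complex.Re x + complex.Re y.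
Proof. by case: x; case: y. Qed.

Lemma Re_ge0 (x : C) : 0 <= x -> 0 <= complex.Re x.
Proof. by rewrite lecE => /andP[]. Qed.

Lemma me_unit d (Psi : 'cV[C]_(d * d)) : (0 < d)%N -> max_entangled Psi ->
  (adj Psi *m Psi) 0 0 = 1.
Proof.
move=> d0 [e [f [al [oe ofb na ->]]]].
rewrite -[X in (X *m _) 0 0]mulmx1 quadE.
under eq_bigr => k _.
  rewrite (bigD1 k) //= big1 ?addr0; last first.
    by move=> l /negbTE lk; rewrite mulmx1 tens_inner oe ofb eq_sym lk mulr0 mulr0.
  rewrite mulmx1 tens_inner oe ofb eqxx mulr1 mulr1 mulrC -normCK na.
  over.
rewrite sumr_const card_ord -(mulr_natr (d%:R^-1)) mulVf //.
by rewrite pnatr_eq0 -lt0n.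
Qed.

Lemma prod_unit d (phi psi : 'cV[C]_d) : unit_vec phi -> unit_vec psi ->
  (adj (phi *t psi) *m (phi *t psi)) 0 0 = 1.
Proof. by rewrite /unit_vec tens_inner => -> ->; rewrite mulr1. Qed.

Lemma prob_sum N (M0 M1 : 'M[C]_N) v : povm2 M0 M1 -> (adj v *m v) 0 0 = 1 ->
  prob M0 (proj v) + prob M1 (proj v) = 1.
Proof.
move=> [_ [_ eM]] u; rewrite /prob !quad1 -ReD.
have -> : (adj v *m M0 *m v) 0 0 + (adj v *m M1 *m v) 0 0 =
  (adj v *m (M0 + M1) *m v) 0 0 by rewrite mulmxDr mulmxDl !mxE.
by rewrite eM mulmx1 u.
Qed.

Lemma prob_ge0 N (M : 'M[C]_N) v : psd M -> 0 <= prob M (proj v).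
Proof. by move=> [_ H]; rewrite /prob quad1; apply: Re_ge0; apply: H. Qed.

End Aux2.

Section Aux3.
Variable R : rcfType.
Local Notation C := (R[i]).
Local Open Scope complex_scope.

Definition sgb (b : bool) : R := if b then -1 else 1.

Lemma sum_sg d (k l : 'I_d) : k != l ->
  \sum_(s : {ffun 'I_d -> bool}) sgb (s k) * sgb (s l) = 0.
Proof.
move=> kl.
pose fl (s : {ffun 'I_d -> bool}) : {ffun 'I_d -> bool} :=
  [ffun j => if j == k then ~~ s j else s j].
have flK : involutive fl.
  by move=> s; apply/ffunP => j; rewrite !ffunE; case: eqP => // _; rewrite negbK.
set S := \sum_s _.
have : S = - S.
  rewrite {1}/S (reindex_inj (inv_inj flK)) -sumrN; apply: eq_bigr => s _.
  have lk : (l == k) = false by rewrite eq_sym; apply/negbTE.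
  by rewrite /fl !ffunE eqxx lk; case: (s k); rewrite /sgb /=; ring.
lra.
Qed.

End Aux3.

Section Aux4.
Variable R : rcfType.
Local Notation C := (R[i]).
Local Open Scope complex_scope.

Lemma sum_sg_same d (k : 'I_d) :
  \sum_(s : {ffun 'I_d -> bool}) sgb R (s k) * sgb R (s k) = (2 ^ d)%:R.
Proof.
rewrite (eq_bigr (fun _ => 1)); last by move=> s _; case: (s k); rewrite /sgb; ring.
by rewrite sumr_const card_ffun card_bool card_ord.
Qed.

Lemma conjR (x : R) : Num.conj (x%:C : C) = x%:C.
Proof. exact: conjc_real. Qed.

Lemma ReM (x : R) (z : C) : complex.Re (x%:C * z) = x * complex.Re z.
Proof. by case: z => a b /=; rewrite mul0r subr0. Qed.

Lemma Re_sum I (r : seq I) (P : pred I) (F : I -> C) :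
  complex.Re (\sum_(i <- r | P i) F i) = \sum_(i <- r | P i) complex.Re (F i).
Proof. exact: (big_morph _ (@ReD R) (erefl _)). Qed.

Variables (d : nat) (d0 : (0 < d)%N).
Definition ev (k : 'I_d) : 'cV[C]_d := delta_mx k 0.
Definition bv (k : 'I_d) : 'cV[C]_(d * d) := ev k *t ev k.
Definition cc : R := (Num.sqrt (d%:R : R))^-1.
Definition av (s : {ffun 'I_d -> bool}) k : C := (sgb R (s k) * cc)%:C.
Definition vv s : 'cV[C]_(d * d) := \sum_k av s k *: bv k.

Lemma cc2 : cc ^+ 2 = d%:R^-1.
Proof. by rewrite /cc exprVn sqr_sqrtr // ler0n. Qed.

Lemma vv_me s : max_entangled (vv s).
Proof.
exists ev, ev, (av s); split => //.
- by move=> k l; rewrite delta_inner.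
- by move=> k l; rewrite delta_inner.
move=> k; rewrite normCK conjR -rmorphM /=.
have -> : sgb R (s k) * cc * (sgb R (s k) * cc) = d%:R^-1.
  by rewrite -cc2; case: (s k); rewrite /sgb; ring.
by rewrite fmorphV rmorph_nat.
Qed.

Lemma average (M : 'M[C]_(d * d)) :
  exists s k, prob M (proj (vv s)) <= prob M (proj (bv k)).
Proof.
pose m k l := (adj (bv k) *m M *m bv l) 0 0.
pose F s := prob M (proj (vv s)).
pose G k := prob M (proj (bv k)).
have GE k : G k = complex.Re (m k k) by rewrite /G /prob quad1.
have FE s : F s = \sum_k \sum_l sgb R (s k) * sgb R (s l) * cc ^+ 2 * complex.Re (m k l).
  rewrite /F /prob quad1 /vv quadE Re_sum; apply: eq_bigr => k _.
  rewrite Re_sum; apply: eq_bigr => l _.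
  rewrite /av conjR -rmorphM ReM; congr (_ * _); ring.
have sumF : \sum_s F s = (2 ^ d)%:R * cc ^+ 2 * \sum_k G k.
  under eq_bigr do rewrite FE.
  rewrite exchange_big /= mulr_sumr; apply: eq_bigr => k _.
  rewrite exchange_big /= (bigD1 k) //= [X in _ + X]big1 ?addr0; last first.
    by move=> l lk; rewrite -!mulr_suml sum_sg ?mul0r // eq_sym.
  by rewrite -!mulr_suml sum_sg_same GE.
pose s1 : {ffun 'I_d -> bool} := [ffun=> false].
pose k1 : 'I_d := Ordinal d0.
case: (@arg_minP _ _ _ s1 xpredT F) => // s0 _ Hs0.
case: (@arg_maxP _ _ _ k1 xpredT G) => // k0 _ Hk0.
exists s0, k0; rewrite -/(F s0) -/(G k0).
have h1 : \sum_(s : {ffun 'I_d -> bool}) F s0 <= \sum_s F s by apply: ler_sum => s _; apply: Hs0.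
have h2 : \sum_k G k <= \sum_(k < d) G k0 by apply: ler_sum => k _; apply: Hk0.
rewrite sumr_const card_ffun card_bool card_ord in h1.
rewrite sumr_const card_ord in h2.
rewrite sumF -(mulr_natl (F s0)) in h1; rewrite -mulr_natl in h2.
have hc : cc ^+ 2 * d%:R = 1 by rewrite cc2 mulVf // pnatr_eq0 -lt0n.
have hT : 0 < (2 ^ d)%:R :> R by rewrite ltr0n expn_gt0.
have hc0 : 0 <= cc ^+ 2 by apply: sqr_ge0.
have h3 : (2 ^ d)%:R * cc ^+ 2 * \sum_k G k <= (2 ^ d)%:R * cc ^+ 2 * (d%:R * G k0).
  by apply: ler_wpM2l => //; apply: mulr_ge0 => //; apply: ltW.
have h4 : (2 ^ d)%:R * cc ^+ 2 * (d%:R * G k0) = (2 ^ d)%:R * G k0.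
  by rewrite mulrA -(mulrA _ (cc ^+ 2)) hc mulr1.
rewrite -(ler_pM2l hT) -h4; exact: le_trans h1 h3.
Qed.

End Aux4.

Local Open Scope classical_set_scope.

Theorem theorem6p1 (R : realType) (n : nat) (M0 M1 : 'M[R[i]]_(2 ^ n * 2 ^ n)) :
  povm2 M0 M1 ->
  1 <= sup [set prob M1 rho | rho in @H0 R (2 ^ n)]
       + sup [set prob M0 rho | rho in @H1 R (2 ^ n)]
  /\ (forall delta : R,
        (forall rho, @H1 R (2 ^ n) rho -> prob M0 rho <= delta) ->
        exists rho, @H0 R (2 ^ n) rho /\ 1 - delta <= prob M1 rho).
Proof.
move=> P; have d0 : (0 < 2 ^ n)%N by rewrite expn_gt0.
have [s0 [k0 Hav]] := average R _ d0 M1.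
have Hrho : @H0 R (2 ^ n) (proj (bv R _ k0)).
  by exists (ev R _ k0), (ev R _ k0); split => //; rewrite /unit_vec /ev delta_inner eqxx.
have Hsig : @H1 R (2 ^ n) (proj (vv R _ s0)) by exists (vv R _ s0); split => //; apply: vv_me.
have Usig := me_unit _ _ _ d0 (vv_me R _ s0).
have Esig := prob_sum _ _ _ _ _ P Usig.
have [psd0 [psd1 _]] := P.
have key : 1 <= prob M1 (proj (bv R _ k0)) + prob M0 (proj (vv R _ s0)).
  by rewrite -Esig addrC lerD2r.
split; last first.
  move=> delta Hd; exists (proj (bv R _ k0)); split => //.
  have := Hd _ Hsig; move: key; set a := prob _ _; set b := prob _ _ => key hb.
  by rewrite lerBlDr (le_trans key) // lerD2l.
have hA : has_sup [set prob M1 rho | rho in @H0 R (2 ^ n)].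
  split; first by exists (prob M1 (proj (bv R _ k0))), (proj (bv R _ k0)).
  exists 1 => _ [rho [phi [psi [u1 u2 ->]]] <-].
  have := prob_sum _ _ _ _ _ P (prod_unit _ _ _ _ u1 u2); have := prob_ge0 _ _ _ (phi *t psi) psd0.
  move=> h0 <-; by rewrite lerDr.
have hB : has_sup [set prob M0 rho | rho in @H1 R (2 ^ n)].
  split; first by exists (prob M0 (proj (vv R _ s0))), (proj (vv R _ s0)).
  exists 1 => _ [rho [Psi [me ->]] <-].
  have := prob_sum _ _ _ _ _ P (me_unit _ _ _ d0 me); have := prob_ge0 _ _ _ Psi psd1.
  move=> h0 <-; by rewrite lerDl.
apply: (le_trans key); apply: lerD.
  by apply: (sup_upper_bound hA); exists (proj (bv R _ k0)).
by apply: (sup_upper_bound hB); exists (proj (vv R _ s0)).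
Qed.
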